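(* Let $m\ge 2$, fix $i_1,\dots,i_m\in\{1,\dots,n\}$, and let $a,r,s,t\ge0$ be integers with $2a+r+(s+2)+t=m$. Then $$[\eta^ax^r\gamma^{s+2}\partial^t;i_1,\dots,i_m]=2(a+1)\,[\eta^{a+1}x^r\gamma^s\partial^t;i_1,\dots,i_m].$$
   Context: Fix $n\ge1$ and an invertible complex matrix $\eta=(\eta^{ij})$ with $\eta^{ij}=\eta^{ji}$. $W(2n|n)$ is the associative superalgebra generated by even $x^1,\dots,x^n,\partial_1,\dots,\partial_n$ and odd $\gamma^1,\dots,\gamma^n$ with relations $x^ix^j=x^jx^i$, $\partial_i\partial_j=\partial_j\partial_i$, $\partial_ix^j-x^j\partial_i=\delta_i^j$, $\gamma^i$ commuting with all $x^j,\partial_j$, $\gamma^i\gamma^j+\gamma^j\gamma^i=2\eta^{ij}$; $\partial^i:=\eta^{ij}\partial_j$ (summed). Bracket symbol: for integers $a,r,s,t\ge0$ with $2a+r+s+t=m$ and indices $i_1,\dots,i_m$, for $\sigma\in S_m$ put $T_\sigma:=\prod_{k=0}^{a-1}\eta^{i_{\sigma(2k+1)}i_{\sigma(2k+2)}}\cdot x^{i_{\sigma(2a+1)}}\cdots x^{i_{\sigma(2a+r)}}\cdot\gamma^{i_{\sigma(2a+r+1)}}\cdots\gamma^{i_{\sigma(2a+r+s)}}\cdot\partial^{i_{\sigma(2a+r+s+1)}}\cdots\partial^{i_{\sigma(m)}}$, and $[\eta^ax^r\gamma^s\partial^t;i_1,\dots,i_m]:=\frac{1}{2^a\,a!\,r!\,t!}\sum_{\sigma\in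 S_m}T_\sigma$; equivalently, the sum of $T_\sigma$ over one representative of each orbit of orderings under swapping the two indices within an $\eta$-pair, permuting the $\eta$-pairs, permuting the $x$-positions and permuting the $\partial$-positions. Factors with exponent $0$ are omitted, and the symbol is defined to be $0$ if the exponent of $x$ is negative. *)

(* Defs.v *)
From mathcomp Require Import all_boot all_algebra all_fingroup.
From mathcomp Require Import complex Rstruct.
Set Implicit Arguments. Unset Strict Implicit. Unset Printing Implicit Defensive.
Import GRing.Theory.
Local Open Scope ring_scope.

Definition CC : fieldType := complex Rdefinitions.R.

(* Generators of W(2n|n) inside a C-algebra A (indices 0..n-1 instead of 1..n):
   x i = x^i, d i = partial_i, g i = gamma^i.  The defining relations: *)
Definition weyl_clifford_rels (n : nat) (A : algType CC) (eta : 'M[CC]_n)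
    (x d g : 'I_n -> A) : Prop :=
  (forall i j, x i * x j = x j * x i) /\
  (forall i j, d i * d j = d j * d i) /\
  (forall i j, d i * x j - x j * d i = (i == j)%:R) /\
  (forall i j, g i * x j = x j * g i) /\
  (forall i j, g i * d j = d j * g i) /\
  (forall i j, g i * g j + g j * g i = (2%:R * eta i j) *: 1).

Definition dup (n : nat) (A : algType CC) (eta : 'M[CC]_n) (d : 'I_n -> A)
    (i : 'I_n) : A :=
  \sum_(j < n) eta i j *: d j.

Definition Tsigma (n m : nat) (A : algType CC) (eta : 'M[CC]_n)
    (x d g : 'I_n -> A) (a r s t : nat) (idx : 'I_m -> 'I_n)
    (sigma : 'S_m) : A :=
  let j (k : 'I_m) := idx (sigma k) in
  (* eta-pairs occupy positions (2k, 2k+1), k < a *)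
  (\prod_(k : 'I_m | (k < 2 * a)%N && ~~ odd k)
      \prod_(k' : 'I_m | val k' == (val k).+1) eta (j k) (j k')) *:
  ((\prod_(k : 'I_m | (2 * a <= k < 2 * a + r)%N) x (j k)) *
   (\prod_(k : 'I_m | (2 * a + r <= k < 2 * a + r + s)%N) g (j k)) *
   (\prod_(k : 'I_m | (2 * a + r + s <= k < 2 * a + r + s + t)%N)
      dup eta d (j k))).

(* [eta^a x^r gamma^s partial^t; i_1,...,i_m]
   := 1/(2^a a! r! t!) * sum_{sigma in S_m} T_sigma  (meaningful when 2a+r+s+t = m) *)
Definition bracket (n m : nat) (A : algType CC) (eta : 'M[CC]_n)
    (x d g : 'I_n -> A) (a r s t : nat) (idx : 'I_m -> 'I_n) : A :=
  ((2 ^ a * a`! * r`! * t`!)%:R : CC)^-1 *: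
    \sum_(sigma : 'S_m) Tsigma eta x d g a r s t idx sigma.

(* Main.v *)
Require Import Defs.
From mathcomp Require Import all_boot all_algebra all_fingroup.
From mathcomp Require Import complex Rstruct.
From mathcomp Require Import zify ring.
Import GRing.Theory.
Local Open Scope ring_scope.

Definition Tn {n : nat} (eta : 'M[CC]_n) {A : algType CC} (x d g : 'I_n -> A)
  (F : nat -> 'I_n) (a r s t : nat) : A :=
 (\prod_(i < a) eta (F (2 * i)%N) (F (2 * i).+1)) *:
 (\prod_(2 * a <= i < 2 * a + r) x (F i) *
  \prod_(2 * a + r <= i < 2 * a + r + s) g (F i) *
  \prod_(2 * a + r + s <= i < 2 * a + r + s + t) dup eta d (F i)).

Lemma range_prod {A : ringType} (M lo hi : nat) (F : nat -> A) :
  (hi <= M)%N ->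
  \prod_(k : 'I_M | (lo <= k < hi)%N) F k = \prod_(lo <= i < hi) F i.
Proof.
move=> hM.
rewrite -(big_mkord (fun k => (lo <= k < hi)%N) F).
rewrite (big_nat_widen lo hi M) // (big_nat_widenl lo 0) //.
by apply: eq_bigl => i /=; rewrite andbC.
Qed.

Lemma even_prod {A : ringType} (a : nat) (G : nat -> A) :
  \prod_(0 <= i < 2 * a | ~~ odd i) G i = \prod_(i < a) G (2 * i)%N.
Proof.
elim: a => [|a IH]; first by rewrite big_geq // big_ord0.
rewrite big_ord_recr -IH /= !(big_mkcond (fun i => ~~ odd i)).
have -> : (2 * a.+1 = (2 * a).+2)%N by lia.
rewrite !big_nat_recr //= oddM /= mulr1.
by [].
Qed.

Lemma Tsigma_Tn {n : nat} (eta : 'M[CC]_n) {A : algType CC} (x d g : 'I_n -> A)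
  (M : nat) (idx : 'I_M.+1 -> 'I_n) (a r s t : nat) (sigma : 'S_M.+1) :
  (2 * a + r + s + t <= M.+1)%N ->
  Tsigma eta x d g a r s t idx sigma =
  Tn eta x d g (fun i => idx (sigma (inord i))) a r s t.
Proof.
move=> hb; rewrite /Tsigma /Tn.
set F := fun i => idx (sigma (inord i)).
congr (_ *: _).
  rewrite (eq_bigr (fun k : 'I_M.+1 => eta (F k) (F k.+1))); last first.
    move=> k /andP [hk hodd].
    have hk2 : (k.+1 < M.+1)%N.
      move/negbTE: hodd => hodd; have hk' := odd_double_half k.
      rewrite hodd add0n -mul2n in hk'; lia.
    rewrite (big_pred1 (inord k.+1)); last first.
      by move=> k'; rewrite /= -val_eqE /= inordK.
    by rewrite /F inord_val.
  rewrite -(big_mkord (fun k => (k < 2 * a)%N && ~~ odd k) (fun k => eta (F k) (F k.+1))).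
  rewrite -[RHS](even_prod a (fun k => eta (F k) (F k.+1))).
  rewrite (big_nat_widen 0 (2 * a) M.+1); last by lia.
  by apply: eq_bigl => i; rewrite andbC.
have E : forall (h : 'I_n -> A) lo hi, (hi <= M.+1)%N ->
   \prod_(k : 'I_M.+1 | (lo <= k < hi)%N) h (idx (sigma k)) =
   \prod_(lo <= i < hi) h (F i).
  move=> h lo hi hh; rewrite -(range_prod M.+1) //.
  by apply: eq_bigr => k _; rewrite /F inord_val.
rewrite !E //; lia.
Qed.

Lemma Tn_ext {n : nat} (eta : 'M[CC]_n) {A : algType CC} (x d g : 'I_n -> A)
  (F F' : nat -> 'I_n) (a r s t : nat) :
  (forall i, (i < 2 * a + r + s + t)%N -> F i = F' i) ->
  Tn eta x d g F a r s t = Tn eta x d g F' a r s t.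
Proof.
move=> H; rewrite /Tn.
congr (_ *: (_ * _ * _)).
- by apply: eq_bigr => i _; rewrite !H //; have := ltn_ord i; lia.
- by apply: eq_big_nat => i hi; rewrite H //; lia.
- by apply: eq_big_nat => i hi; rewrite H //; lia.
- by apply: eq_big_nat => i hi; rewrite H //; lia.
Qed.

Definition V {n : nat} (eta : 'M[CC]_n) {A : algType CC} (x d g : 'I_n -> A)
  (F : nat -> 'I_n) (a r s t : nat) : A :=
 (\prod_(i < a) eta (F (2 * i)%N) (F (2 * i).+1)) *:
 (\prod_(2 * a <= i < 2 * a + r) x (F i) *
  \prod_((2 * a + r).+2 <= i < 2 * a + r + s.+2) g (F i) *
  \prod_(2 * a + r + s.+2 <= i < 2 * a + r + s.+2 + t) dup eta d (F i)).

Definition swp (p i : nat) : nat :=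
  if i == p then p.+1 else if i == p.+1 then p else i.

Lemma pair_sum {n : nat} (eta : 'M[CC]_n) {A : algType CC} (x d g : 'I_n -> A)
  (hg : forall i j, g i * g j + g j * g i = (2%:R * eta i j) *: 1)
  (F : nat -> 'I_n) (a r s t : nat) :
  Tn eta x d g F a r s.+2 t +
  Tn eta x d g (fun i => F (swp (2 * a + r) i)) a r s.+2 t =
  (2%:R * eta (F (2 * a + r)%N) (F (2 * a + r).+1)) *: V eta x d g F a r s t.
Proof.
set p := (2 * a + r)%N.
set F' := fun i => F (swp p i).
have sw1 : forall i, (i < p)%N -> F' i = F i.
  move=> i hi; rewrite /F' /swp; case: eqP => h1; first lia.
  by case: eqP => h2 //; lia.
have sw2 : forall i, (p.+2 <= i)%N -> F' i = F i.
  move=> i hi; rewrite /F' /swp; case: eqP => h1; first lia.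
  by case: eqP => h2 //; lia.
have swa : F' p = F p.+1 by rewrite /F' /swp eqxx.
have swb : F' p.+1 = F p.
  by rewrite /F' /swp; case: eqP => h; [lia | rewrite eqxx].
have hG : forall H : nat -> 'I_n,
  \prod_(2 * a + r <= i < 2 * a + r + s.+2) g (H i) =
  g (H p) * (g (H p.+1) * \prod_(p.+2 <= i < 2 * a + r + s.+2) g (H i)).
  by move=> H; rewrite big_ltn; last lia; rewrite big_ltn //; lia.
rewrite /Tn /V !hG swa swb.
have -> : \prod_(i < a) eta (F' (2 * i)%N) (F' (2 * i).+1) =
          \prod_(i < a) eta (F (2 * i)%N) (F (2 * i).+1).
  by apply: eq_bigr => i _; have := ltn_ord i; move=> hi; rewrite !sw1 //; lia.
have -> : \prod_(2 * a <= i < 2 * a + r) x (F' i) =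
          \prod_(2 * a <= i < 2 * a + r) x (F i).
  by apply: eq_big_nat => i hi; rewrite sw1 //; lia.
have -> : \prod_(p.+2 <= i < 2 * a + r + s.+2) g (F' i) =
          \prod_(p.+2 <= i < 2 * a + r + s.+2) g (F i).
  by apply: eq_big_nat => i hi; rewrite sw2 //; lia.
have -> : \prod_(2 * a + r + s.+2 <= i < 2 * a + r + s.+2 + t) dup eta d (F' i) =
          \prod_(2 * a + r + s.+2 <= i < 2 * a + r + s.+2 + t) dup eta d (F i).
  by apply: eq_big_nat => i hi; rewrite sw2 //; lia.
set E := \prod_(i < a) _.
set X := \prod_(2 * a <= i < 2 * a + r) _.
set R := \prod_(p.+2 <= i < 2 * a + r + s.+2) _.
set D := \prod_(2 * a + r + s.+2 <= i < 2 * a + r + s.+2 + t) _.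
rewrite -scalerDr -mulrDl -mulrDr.
have -> : g (F p) * (g (F p.+1) * R) + g (F p.+1) * (g (F p) * R) =
          (g (F p) * g (F p.+1) + g (F p.+1) * g (F p)) * R.
  by rewrite mulrDl !mulrA.
rewrite hg -scalerAl mul1r.
by rewrite -!scalerAr -!scalerAl !scalerA mulrC.
Qed.

Definition rho (a r i : nat) : nat :=
  if (i < 2 * a)%N then i else if i == (2 * a)%N then (2 * a + r)%N
  else if i == (2 * a).+1 then (2 * a + r).+1
  else if (i < (2 * a + r).+2)%N then (i - 2)%N else i.

Definition rhoinv (a r i : nat) : nat :=
  if (i < 2 * a)%N then i else if i == (2 * a + r)%N then (2 * a)%N
  else if i == (2 * a + r).+1 then (2 * a).+1
  else if (i < (2 * a + r).+2)%N then (i + 2)%N else i.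

Ltac rho_tac := rewrite /rho /rhoinv; repeat (case: ifP => /= ?); lia.

Lemma rhoK a r i : rhoinv a r (rho a r i) = i.
Proof. rewrite /rho; repeat (case: ifP => /= ?); rho_tac. Qed.

Lemma rho_lt a r i : (i < 2 * a)%N -> rho a r i = i.
Proof. move=> ?; rho_tac. Qed.
Lemma rho_2a a r : rho a r (2 * a) = (2 * a + r)%N.
Proof. rho_tac. Qed.
Lemma rho_2a1 a r : rho a r (2 * a).+1 = (2 * a + r).+1.
Proof. rho_tac. Qed.
Lemma rho_mid a r i : (2 * a + 2 <= i < (2 * a + r).+2)%N -> rho a r i = (i - 2)%N.
Proof. move=> ?; rho_tac. Qed.
Lemma rho_hi a r i : ((2 * a + r).+2 <= i)%N -> rho a r i = i.
Proof. move=> ?; rho_tac. Qed.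
Lemma rho_bound a r M i : ((2 * a + r).+2 <= M)%N -> (i < M)%N -> (rho a r i < M)%N.
Proof. move=> ? ?; rho_tac. Qed.

Lemma step2 {n : nat} (eta : 'M[CC]_n) {A : algType CC} (x d g : 'I_n -> A)
  (F : nat -> 'I_n) (a r s t : nat) :
  Tn eta x d g (fun i => F (rho a r i)) a.+1 r s t =
  eta (F (2 * a + r)%N) (F (2 * a + r).+1) *: V eta x d g F a r s t.
Proof.
rewrite /Tn /V big_ord_recr /= rho_2a rho_2a1.
have -> : \prod_(i < a) eta (F (rho a r (2 * i))) (F (rho a r (2 * i).+1)) =
          \prod_(i < a) eta (F (2 * i)%N) (F (2 * i).+1).
  by apply: eq_bigr => i _; have := ltn_ord i => hi; rewrite !rho_lt //; lia.
have -> : \prod_(2 * a.+1 <= i < 2 * a.+1 + r) x (F (rho a r i)) =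
          \prod_(2 * a <= i < 2 * a + r) x (F i).
  have -> : (2 * a.+1 = 2 * a + 2)%N by lia.
  rewrite big_addn.
  have -> : (2 * a + 2 + r - 2 = 2 * a + r)%N by lia.
  by apply: eq_big_nat => i hi; rewrite rho_mid ?addnK //; lia.
have -> : \prod_(2 * a.+1 + r <= i < 2 * a.+1 + r + s) g (F (rho a r i)) =
          \prod_((2 * a + r).+2 <= i < 2 * a + r + s.+2) g (F i).
  have -> : (2 * a.+1 + r = (2 * a + r).+2)%N by lia.
  have -> : (2 * a + r + s.+2 = (2 * a + r).+2 + s)%N by lia.
  by apply: eq_big_nat => i hi; rewrite rho_hi //; lia.
have -> : \prod_(2 * a.+1 + r + s <= i < 2 * a.+1 + r + s + t) dup eta d (F (rho a r i)) =
          \prod_(2 * a + r + s.+2 <= i < 2 * a + r + s.+2 + t) dup eta d (F i).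
  have -> : (2 * a.+1 + r + s = 2 * a + r + s.+2)%N by lia.
  by apply: eq_big_nat => i hi; rewrite rho_hi //; lia.
by rewrite scalerA mulrC.
Qed.

Theorem lemma5p1 (n : nat) (eta : 'M[CC]_n)
    (eta_sym : eta^T = eta) (eta_inv : eta \in unitmx)
    (A : algType CC) (x d g : 'I_n -> A)
    (rels : weyl_clifford_rels eta x d g)
    (m : nat) (hm2 : (2 <= m)%N) (idx : 'I_m -> 'I_n)
    (a r s t : nat) (hm : (2 * a + r + s.+2 + t)%N = m) :
  bracket eta x d g a r s.+2 t idx
  = ((2 * a.+1)%N%:R : CC) *: bracket eta x d g a.+1 r s t idx.
Proof.
move: (rels) => [_ [_ [_ [_ [_ hg]]]]].
case: m hm2 idx hm => [|M] // _ idx hm.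
have hb : ((2 * a + r).+2 <= M.+1)%N by lia.
have rinj : injective (fun k : 'I_M.+1 => (inord (rho a r k) : 'I_M.+1)).
  move=> k1 k2 /(congr1 val); rewrite /= !inordK ?rho_bound // => h.
  by apply: ord_inj; rewrite -(rhoK a r k1) h rhoK.
pose pi : 'S_M.+1 := perm rinj.
pose tau : 'S_M.+1 := tperm (inord (2 * a + r)) (inord (2 * a + r).+1).
pose T := fun sigma : 'S_M.+1 => Tsigma eta x d g a r s.+2 t idx sigma.
pose T' := fun sigma : 'S_M.+1 => Tsigma eta x d g a.+1 r s t idx sigma.
have E1 : forall sigma, T sigma + T (tau * sigma)%g = 2%:R *: T' (pi * sigma)%g.
  move=> sigma; rewrite /T /T' !Tsigma_Tn; try lia.
  set F := fun i => idx (sigma (inord i)).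
  rewrite (Tn_ext _ _ _ _ (fun i => idx ((tau * sigma)%g (inord i)))
                          (fun i => F (swp (2 * a + r) i))); last first.
    move=> i hi; rewrite permM /F; congr (idx (sigma _)).
    have hi' : (i < M.+1)%N by lia.
    rewrite /tau /swp; case: eqP => [->|h1]; first by rewrite tpermL.
    case: eqP => [->|h2]; first by rewrite tpermR.
    rewrite tpermD //; apply/eqP => /(congr1 val); rewrite /= !inordK //; lia.
  rewrite pair_sum //.
  rewrite (Tn_ext _ _ _ _ (fun i => idx ((pi * sigma)%g (inord i)))
                          (fun i => F (rho a r i))); last first.
    move=> i hi; rewrite permM permE /F; congr (idx (sigma _)).
    have hi' : (i < M.+1)%N by lia.
    by apply: val_inj; rewrite /= !inordK // rho_bound.
  by rewrite step2 /V !scalerA mulrA.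
have S1 : \sum_(sigma : 'S_M.+1) T sigma = \sum_(sigma : 'S_M.+1) T (tau * sigma)%g.
  exact: (reindex_inj (mulgI tau)).
have S2 : \sum_(sigma : 'S_M.+1) T' sigma = \sum_(sigma : 'S_M.+1) T' (pi * sigma)%g.
  exact: (reindex_inj (mulgI pi)).
have key : \sum_(sigma : 'S_M.+1) T sigma = \sum_(sigma : 'S_M.+1) T' sigma.
  have h2 : (2%:R : CC) != 0 by rewrite /CC Num.Theory.pnatr_eq0.
  apply: (@scalerI _ _ 2%:R) => //.
  rewrite S2 [RHS]scaler_sumr scaler_nat mulr2n {2}S1 -big_split /=.
  by apply: eq_bigr => sigma _; rewrite E1.
rewrite /bracket.
have key' := key; rewrite /T /T' in key'; rewrite key' scalerA; congr (_ *: _).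
have -> : (2 ^ a.+1 * (a.+1)`! * r`! * t`! = (2 * a.+1) * (2 ^ a * a`! * r`! * t`!))%N.
  by rewrite expnS factS; ring.
have hc : ((2 * a.+1)%N%:R : CC) != 0 by rewrite /CC Num.Theory.pnatr_eq0.
by rewrite (natrM _ (2 * a.+1)%N (2 ^ a * a`! * r`! * t`!)%N) invfM mulrA mulfV // mul1r.
Qed.
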